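(* Let $k'\geq 2$, $h\geq 1$ and $r$ be integers with $1\leq r\leq k'-1$, and let $n'=hk'+r$. Then there exist positive integers $s$ and $k$ such that $C_{sk}^k$ has a minor isomorphic to $C_{n'}^{k'}$ if and only if $r\leq h-1$.
   Context: For integers $n\geq2$, $1\leq k\leq n-1$, $\mathbb{Z}_n=\{0,\dots,n-1\}$ with addition modulo $n$, and $C_n^k$ is the $n\times n$ circulant $0,1$ matrix whose $i$-th row ($i\in\mathbb{Z}_n$) is the incidence vector of $\{i,i+1,\dots,i+k-1\}$ (mod $n$). For a $0,1$ matrix $A$ with columns indexed by $\mathbb{Z}_n$ and $N\subset\mathbb{Z}_n$, the minor $A/N$ (obtained by contraction of $N$) is the submatrix obtained by removing the columns indexed by $N$ and then removing all dominating rows (a row $v$ is dominating if $v\geq u$ for some other row $u\neq v$). ''Minor'' always means a minor obtained by contraction; two matrices are isomorphic if one is obtained from the other by permuting rows and columns. *)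

(* Defs.v *)
From mathcomp Require Import all_boot.
Set Implicit Arguments. Unset Strict Implicit. Unset Printing Implicit Defensive.

(* A 0,1 matrix is represented as a clutter-like object: its set of columns
   [mcols] (a subset of a finite index type T) and its set of rows, each row
   being identified with its support (the set of columns where it has a 1).
   Rows are considered as a set, so isomorphism up to row permutation is
   built in. *)
Record mat01 (T : finType) := Mat01 { mcols : {set T}; mrows : {set {set T}} }.

(* C_n^k : columns 'I_n = Z_n, row i = {i, i+1, ..., i+k-1} (mod n). *)
Definition circ_row (n k : nat) (i : 'I_n) : {set 'I_n} :=
  [set j : 'I_n | ((j + n - i) %% n < k)%N].

Definition circulant (n k : nat) : mat01 'I_n :=
  Mat01 [set: 'I_n] [set circ_row k i | i : 'I_n].

Definition contract (T : finType) (A : mat01 T) (N : {set T}) : mat01 T :=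
  let R := [set v :\: N | v in mrows A] in
  Mat01 (mcols A :\: N) [set v in R | [forall u in R, ~~ (u \proper v)]].

Definition mat_iso (T1 T2 : finType) (A : mat01 T1) (B : mat01 T2) : Prop :=
  exists f : T1 -> T2,
    {in mcols A &, injective f} /\ f @: mcols A = mcols B /\
    [set f @: (v : {set T1}) | v in mrows A] = mrows B.

Definition has_minor (T1 T2 : finType) (A : mat01 T1) (B : mat01 T2) : Prop :=
  exists N : {set T1}, N \subset mcols A /\ mat_iso (contract A N) B.

(* Main.v *)
Require Import Defs.
From mathcomp Require Import all_boot zify.
Set Implicit Arguments. Unset Strict Implicit. Unset Printing Implicit Defensive.

Ltac ifs := repeat match goal with
 | |- context [if ?c then _ else _] =>
    lazymatch c with context [if _ then _ else _] => fail | _ => case: (boolP c) => ? end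
 end.

Definition off n (a x : 'I_n) : nat := (x + n - a) %% n.

Lemma mod2 m n : m < n + n -> m %% n = if m < n then m else m - n.
Proof.
case: ifP => h1 h2; first by rewrite modn_small.
have -> : m = (m - n) + n by lia.
rewrite modnDr modn_small; lia.
Qed.

Lemma offE n (a x : 'I_n) : off a x = if x < a then x + n - a else x - a.
Proof.
have := ltn_ord a; have := ltn_ord x => hx ha.
rewrite /off mod2; last lia. by ifs; lia.
Qed.

Lemma in_circ n k (a x : 'I_n) : (x \in circ_row k a) = (off a x < k).
Proof. by rewrite inE. Qed.

Lemma off_lt n (a x : 'I_n) : off a x < n.
Proof. have := ltn_ord a; have := ltn_ord x; rewrite offE; case: ifP; lia. Qed.

Lemma off_id n (a : 'I_n) : off a a = 0.
Proof. rewrite offE ltnn; lia. Qed.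

Lemma off_eq0 n (a x : 'I_n) : off a x = 0 -> x = a.
Proof.
have := ltn_ord a; have := ltn_ord x; rewrite offE => ??.
case: ifP => ??; apply: val_inj => /=; lia.
Qed.

Lemma off_add n (a b x : 'I_n) : off a x = (off a b + off b x) %% n.
Proof.
have := ltn_ord a; have := ltn_ord x; have := ltn_ord b => ???.
rewrite !offE mod2; last by ifs; lia.
ifs; lia.
Qed.

Lemma off_inj n (a : 'I_n) : injective (off a).
Proof.
move=> x y; have := ltn_ord a; have := ltn_ord x; have := ltn_ord y.
rewrite !offE => ???; do 2 case: ifP => ?; move=> ?; apply: val_inj => /=; lia.
Qed.

Lemma off_inj2 n (x : 'I_n) : injective (fun a => off a x).
Proof.
move=> a b /=; have := ltn_ord a; have := ltn_ord x; have := ltn_ord b.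
rewrite !offE => ???; do 2 case: ifP => ?; move=> ?; apply: val_inj => /=; lia.
Qed.

Lemma off_ex n (a : 'I_n) d : d < n -> exists x : 'I_n, off a x = d.
Proof.
move=> hd; have hn : 0 < n by lia.
exists (Ordinal (ltn_pmod (a + d) hn)).
have := ltn_ord a => ?; rewrite offE /= mod2; last lia.
ifs; lia.
Qed.

Lemma off_ex2 n (x : 'I_n) d : d < n -> exists a : 'I_n, off a x = d.
Proof.
move=> hd; have hn : 0 < n by lia.
exists (Ordinal (ltn_pmod (x + n - d) hn)).
have := ltn_ord x => ?; rewrite offE /= mod2; last lia.
ifs; lia.
Qed.

Lemma card_lt n k : k <= n -> #|[set y : 'I_n | y < k]| = k.
Proof.
move=> hk; rewrite -sum1_card.
rewrite (eq_bigl (fun i : 'I_n => i < k)); last by move=> i; rewrite inE.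
by rewrite (big_ord_narrow (F := fun _ => 1) hk) sum1_card card_ord.
Qed.

Lemma card_inj_lt n k (phi : 'I_n -> nat) :
  injective phi -> (forall x, phi x < n) -> k <= n ->
  #|[set x | phi x < k]| = k.
Proof.
move=> inj hlt hk.
pose psi x := Ordinal (hlt x).
have psi_inj : injective psi by move=> x y /(congr1 val) /= /inj.
transitivity #|[set y : 'I_n | y < k]|; last exact: card_lt hk.
rewrite -[RHS](card_preimset _ psi_inj); apply: eq_card => x.
by rewrite !inE.
Qed.

Lemma card_circ n k (a : 'I_n) : k <= n -> #|circ_row k a| = k.
Proof.
move=> hk; rewrite -[RHS](card_inj_lt (@off_inj n a) (@off_lt n a) hk).
by apply: eq_card => x; rewrite !inE.
Qed.

Lemma deg_circ n k (x : 'I_n) : k <= n -> #|[set a | x \in circ_row k a]| = k.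
Proof.
move=> hk; rewrite -[RHS](card_inj_lt (@off_inj2 n x) (fun a => off_lt a x) hk).
by apply: eq_card => a; rewrite !inE.
Qed.

Lemma circ_inj n k : 0 < k < n -> injective (@circ_row n k).
Proof.
case/andP=> hk hkn a b eab.
have : a \in circ_row k b by rewrite -eab in_circ off_id.
rewrite in_circ => hd.
case: (posnP (off b a)) => [/off_eq0 //|dpos].
have [x hx] : exists x, off a x = n.-1 by apply: off_ex; lia.
have : x \in circ_row k b.
  rewrite in_circ (off_add b a x) hx mod2; last lia.
  ifs; lia.
rewrite -eab in_circ hx; lia.
Qed.

Lemma min_exists (T : finType) (R : {set {set T}}) v : v \in R ->
  exists2 u, u \in [set w in R | [forall u' in R, ~~ (u' \proper w)]] & u \subset v.
Proof.
move=> vR.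
case: (arg_minnP (fun u : {set T} => #|u|) (_ : (fun u => (u \in R) && (u \subset v)) v)).
  by rewrite vR subxx.
move=> u /andP[uR uv] umin; exists u => //.
rewrite inE uR /=; apply/forall_inP => u' u'R; apply/negP => pu.
have := umin u'; rewrite u'R (subset_trans (proper_sub pu) uv) => /(_ isT).
by rewrite leqNgt proper_card.
Qed.

Lemma imset_mem (T1 T2 : finType) (f : T1 -> T2) (W u : {set T1}) x :
  {in W &, injective f} -> u \subset W -> x \in W -> (f x \in f @: u) = (x \in u).
Proof.
move=> finj uW xW; apply/imsetP/idP => [[y yu /finj]|]; last by exists x.
by move=> h; rewrite h //; apply: (subsetP uW).
Qed.

Lemma imset_injW (T1 T2 : finType) (f : T1 -> T2) (W u v : {set T1}) :
  {in W &, injective f} -> u \subset W -> v \subset W -> f @: u = f @: v -> u = v.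
Proof.
move=> finj uW vW e; apply/setP => x.
case xW: (x \in W); first by rewrite -(imset_mem finj uW xW) e (imset_mem finj vW xW).
have xu : x \notin u by apply: contraFN xW; apply: (subsetP uW).
have xv : x \notin v by apply: contraFN xW; apply: (subsetP vW).
by rewrite (negbTE xu) (negbTE xv).
Qed.

Lemma imset_sub (T1 T2 : finType) (f : T1 -> T2) (W u v : {set T1}) :
  {in W &, injective f} -> u \subset W -> v \subset W -> (f @: u \subset f @: v) = (u \subset v).
Proof.
move=> finj uW vW; apply/idP/idP; last exact: imsetS.
move=> /subsetP h; apply/subsetP => x xu.
have xW : x \in W by apply: (subsetP uW).
by rewrite -(imset_mem finj vW xW); apply: h; apply: imset_f.
Qed.

Lemma card_sumE (T : finType) (A : {pred T}) : #|A| = \sum_x (x \in A : nat).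
Proof. by rewrite -sum1_card big_mkcond; apply: eq_bigr => x _; case: (x \in A). Qed.

Lemma necessity n k n' k' (N : {set 'I_n}) :
  0 < k < n -> 0 < k' < n' ->
  mat_iso (contract (circulant n k) N) (circulant n' k') ->
  n * k' <= n' * k /\ n' * k + n' <= n * k'.+1.
Proof.
move=> /andP[k0 kn] /andP[k'0 k'n] [f [finj [fW frows]]].
rewrite /= in finj fW frows.
set W := [set: 'I_n] :\: N in finj fW frows.
set R := [set v :\: N | v in _] in frows.
set Rs := [set v in R | _] in frows.
have winR i : circ_row k i :\: N \in R by apply: imset_f; apply: imset_f.
have Rwin u : u \in R -> exists i, u = circ_row k i :\: N.
  by case/imsetP => v /imsetP [i _ ->] ->; exists i.
have RW u : u \in R -> u \subset W.
  by case/Rwin => i ->; apply: setSD; apply: subsetT.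
have RsR u : u \in Rs -> u \in R by rewrite inE => /andP[].
have D1 : #|W| = n'.
  by rewrite -(card_in_imset finj) fW cardsT card_ord.
have D2 u : u \in Rs -> #|u| = k'.
  move=> uRs; have : f @: u \in [set circ_row k' i | i : 'I_n'].
    by rewrite -frows; apply: imset_f.
  case/imsetP => j _ e; rewrite -(card_circ j (ltnW k'n)) -e card_in_imset //.
  by apply: sub_in2 finj; apply/subsetP/RW/RsR.
have gInj : {in Rs &, injective (fun u : {set 'I_n} => f @: u)}.
  by move=> u v /RsR/RW uW /RsR/RW vW; apply: imset_injW finj uW vW.
have D3 : #|Rs| = n'.
  rewrite -(card_in_imset gInj) frows card_imset ?card_ord //.
  by apply: circ_inj; rewrite k'0.
pose c i := #|circ_row k i :\: N|.
have stepA i : k' <= c i.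
  have [u uRs usub] := min_exists (winR i).
  by rewrite -(D2 u uRs); apply: subset_leq_card.
have stepD i : c i <= k'.+1.
  rewrite leqNgt; apply/negP => hc.
  rewrite /c in hc; set S := circ_row k i :\: N in hc.
  have SW : S \subset W by apply: RW; apply: winR.
  pose o x := off i x.
  have ok x : x \in S -> o x < k by rewrite inE in_circ => /andP[].
  pose cnt t := #|[set x in S | o x < t]|.
  have cnt0 : cnt 0 = 0.
    by apply/eqP; rewrite cards_eq0; apply/eqP/setP => x; rewrite !inE ltn0 andbF.
  have cntS t : n <= t -> cnt t = #|S|.
    move=> nt; apply: eq_card => x; rewrite !inE.
    by rewrite (leq_trans (off_lt i x) nt) andbT.
  have cntS1 t : cnt t.+1 <= (cnt t).+1.
    have sub : [set x in S | o x < t.+1] \subset [set x in S | o x < t] :|: [set x | o x == t].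
      apply/subsetP => x; rewrite !inE ltnS => /andP[xS].
      by rewrite [_ <= t]leq_eqVlt => /orP[h|h]; rewrite xS h ?orbT.
    apply: (leq_trans (subset_leq_card sub)); apply: (leq_trans (leq_card_setU _ _)).
    rewrite -addn1 leq_add2l; apply/card_le1_eqP => x y; rewrite !inE => /eqP hx /eqP hy.
    by apply: (@off_inj _ i); move: hx hy; rewrite /o /= => -> ->.
  have exP : exists t, k'.+1 <= cnt t.+1.
    by exists n; rewrite cntS //; lia.
  case: (ex_minnP exP) => t0 ht0 tmin.
  have c0 : cnt t0 <= k'.
    case: t0 ht0 tmin => [|m] ht0 tmin; first by rewrite cnt0.
    by rewrite leqNgt; apply/negP => /tmin; rewrite ltnn.
  have ct0 : cnt t0 = k' by have := cntS1 t0; lia.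
  have ct1 : cnt t0.+1 = k'.+1 by have := cntS1 t0; lia.
  have [q q1 q2] : exists2 q, q \in [set x in S | o x < t0.+1] & q \notin [set x in S | o x < t0].
    apply/subsetPn; apply/negP => sub; have := subset_leq_card sub.
    by rewrite -/(cnt t0) -/(cnt t0.+1) ct0 ct1 ltnn.
  move: q1 q2; rewrite !inE => /andP[qS qt] /nandP[/negP qS'|]; first by rewrite qS in qS'.
  rewrite -leqNgt => qt'; have oq : o q = t0 by lia.
  have [y yS y2] : exists2 y, y \in S & y \notin [set x in S | o x < t0.+1].
    apply/subsetPn; apply/negP => sub; have := subset_leq_card sub.
    rewrite -/(cnt t0.+1) ct1; lia.
  move: y2; rewrite inE yS /= -leqNgt => oy.
  have {}qS : q \in S by move: qS; rewrite /S !inE.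
  have t0k : t0 < k by rewrite -oq; apply: ok.
  have oa x : o x = (t0 + off q x) %% n.
    by rewrite /o /= (off_add i q x); move: oq; rewrite /o /= => ->.
  have qW : q \in W by apply: (subsetP SW).
  have alt x : off q x < n by apply: off_lt.
  pose Hs t := [set x in W | n - t <= off q x].
  pose Ls t := [set x in W | off q x < k - t].
  pose U t := [set x in W | (off q x < k - t) || (n - t <= off q x)].
  have UE t : U t = Ls t :|: Hs t by apply/setP => x; rewrite !inE andb_orr.
  have Ucard t : #|U t| = #|Ls t| + #|Hs t|.
    rewrite UE cardsU; suff -> : Ls t :&: Hs t = set0 by rewrite cards0 subn0.
    apply/setP => x; rewrite !inE; apply/negP => /andP[h1 h2]; move: h1 h2 => /andP[_ h1] /andP[_ h2]; lia.
  pose Q := [set u in Rs | q \in u].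
  have Qcard : k' <= #|Q|.
    have sub : [set circ_row k' j | j in [set j | f q \in circ_row k' j]] \subset
               [set f @: (u : {set 'I_n}) | u in Q].
      apply/subsetP => w /imsetP [j]; rewrite inE => fqj ->.
      have : circ_row k' j \in [set f @: (u : {set 'I_n}) | u in Rs] by rewrite frows imset_f.
      case/imsetP => u uRs e; apply/imsetP; exists u => //.
      by rewrite inE uRs /= -(imset_mem finj (RW _ (RsR _ uRs)) qW) -e.
    have := subset_leq_card sub; rewrite card_imset ?deg_circ; last first.
      by apply: circ_inj; rewrite k'0.
      by apply: ltnW.
    move=> h; apply: (leq_trans h); exact: leq_imset_card.
  have Uform u : u \in Q -> exists t : 'I_k, u = U t.
    rewrite inE => /andP[uRs qu].
    have [j ej] := Rwin _ (RsR _ uRs).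
    have qj : off j q < k by move: qu; rewrite ej !inE => /andP[_ h]; exact: h.
    exists (Ordinal qj); rewrite ej; apply/setP => x; rewrite !inE -/(off j x) /=.
    case: (x \in N) => //=; rewrite (off_add j q x) mod2; last by have := alt x; lia.
    by have := alt x; ifs; lia.
  have Ueq (t1 t2 : nat) : t1 <= t2 -> #|U t1| = #|U t2| -> #|Hs t1| = #|Hs t2| -> U t1 = U t2.
    move=> t12 e1 e2.
    have subH : Hs t1 \subset Hs t2 by apply/subsetP => x; rewrite !inE => /andP[-> h]; lia.
    have subL : Ls t2 \subset Ls t1 by apply/subsetP => x; rewrite !inE => /andP[-> h]; lia.
    have eH : Hs t1 = Hs t2 by apply/eqP; rewrite eqEcard subH e2 leqnn.
    have eL : Ls t2 = Ls t1.
      by apply/eqP; rewrite eqEcard subL /=; move: e1; rewrite !Ucard e2 => /eqP; rewrite eqn_add2r => /eqP ->.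
    by rewrite !UE eH eL.
  have qL t : t < k -> q \in Ls t by move=> tk; rewrite inE qW off_id /=; lia.
  pose hcf u := if [pick t : 'I_k | u == U t] is Some t then #|Hs t| else 0.
  have hcE u : u \in Q -> exists t : 'I_k, u = U t /\ hcf u = #|Hs t|.
    move=> uQ; rewrite /hcf; case: pickP => [t /eqP ut|none]; first by exists t.
    by have [t ut] := Uform u uQ; have := none t; rewrite ut eqxx.
  have QRs u : u \in Q -> u \in Rs by rewrite inE => /andP[].
  have hclt u : u \in Q -> hcf u < k'.
    move=> uQ; have [t [ut ->]] := hcE u uQ.
    have := D2 u (QRs u uQ); rewrite ut Ucard.
    have : 0 < #|Ls t| by apply/card_gt0P; exists q; apply: qL.
    lia.
  have hcinj : {in Q &, injective hcf}.
    move=> u v uQ vQ.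
    have [t [ut ->]] := hcE u uQ; have [t' [vt ->]] := hcE v vQ => e.
    have eU : #|U t| = #|U t'| by rewrite -ut -vt !D2 ?QRs.
    rewrite ut vt; case: (leqP t t') => tt'; first exact: Ueq.
    by symmetry; apply: Ueq => //; apply: ltnW.
  have [u0 u0Q hu0] : exists2 u, u \in Q & hcf u == k'.-1.
    apply/exists_inP; apply: contraT; rewrite negb_exists_in => /forall_inP hne.
    have : size [seq hcf u | u <- enum Q] <= size (iota 0 k'.-1).
      apply: uniq_leq_size; first by rewrite map_inj_in_uniq ?enum_uniq // => u v; rewrite !mem_enum; apply: hcinj.
      move=> m /mapP [u]; rewrite mem_enum => uQ ->; rewrite mem_iota /=.
      have := hclt u uQ; have := hne u uQ; lia.
    by rewrite size_map size_iota -cardE; lia.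
  have [t' [u0t hct']] := hcE u0 u0Q.
  have Hst' : #|Hs t'| = k'.-1 by rewrite -hct'; apply/eqP.
  have Lst' : #|Ls t'| = 1.
    by have := D2 u0 (QRs u0 u0Q); rewrite u0t Ucard Hst'; lia.
  have Hst0 : #|Hs t0| = k'.
    rewrite -ct0; apply: eq_card => x; rewrite !inE andbT; case: (x \in N) => //=.
    change ((x + n - i) %% n) with (o x); rewrite oa mod2; last by have := alt x; lia.
    by have := alt x; ifs; lia.
  have t't0 : t' < t0.
    rewrite ltnNge; apply/negP => t0t'.
    have : Hs t0 \subset Hs t' by apply/subsetP => x; rewrite !inE => /andP[-> h]; lia.
    move/subset_leq_card; rewrite Hst0 Hst'; lia.
  have yL : y \in Ls t'.
    have yW : y \in W by apply: (subsetP SW).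
    have := ok y yS; rewrite inE yW /= oa mod2; last by have := alt y; lia.
    move: oy; rewrite oa mod2; last by have := alt y; lia.
    by have := alt y; ifs; lia.
  have yq : y != q by apply/eqP => e; move: oy; rewrite e oq ltnn.
  have : #|[set y; q]| <= #|Ls t'|.
    apply: subset_leq_card; apply/subsetP => x /set2P [] ->; [exact: yL | apply: qL; lia].
  by rewrite cards2 yq Lst'.
have cE i : c i = \sum_(x : 'I_n) ((x \in W) && (x \in circ_row k i) : nat).
  by rewrite /c card_sumE; apply: eq_bigr => x _; rewrite !inE andbT.
have stepB : \sum_(i < n) c i = n' * k.
  rewrite (eq_bigr _ (fun i _ => cE i)) exchange_big /= -D1 -sum_nat_const.
  rewrite [RHS]big_mkcond /=; apply: eq_bigr => x _.
  case: (x \in W) => /=; last by rewrite big1.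
  by rewrite -[RHS](deg_circ x (ltnW kn)) card_sumE; apply: eq_bigr => i _; rewrite inE.
pose T := [set i | circ_row k i :\: N \in Rs].
have stepC : n' <= #|T|.
  have sub : Rs \subset [set circ_row k i :\: N | i in T].
    apply/subsetP => u uRs; have [i ei] := Rwin u (RsR u uRs).
    by apply/imsetP; exists i => //; rewrite inE -ei.
  by rewrite -D3; apply: (leq_trans (subset_leq_card sub)); apply: leq_imset_card.
split.
  have := @leq_sum _ (index_enum 'I_n) xpredT (fun _ => k') c (fun i _ => stepA i).
  by rewrite stepB sum_nat_const card_ord mulnC.
have h : \sum_(i < n) (c i + (i \in T)) <= \sum_(i < n) k'.+1.
  apply: leq_sum => i _; case iT: (i \in T).
    by move: iT; rewrite inE => /D2; rewrite /c => ->; rewrite addn1.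
  by rewrite addn0; apply: stepD.
move: h; rewrite big_split /= stepB sum_nat_const card_ord -card_sumE.
move: stepC; lia.
Qed.

Lemma min_imset (T1 T2 : finType) (f : T1 -> T2) (W : {set T1}) (R : {set {set T1}}) :
  {in W &, injective f} -> (forall u, u \in R -> u \subset W) ->
  [set f @: (v : {set T1}) | v in [set v in R | [forall u in R, ~~ (u \proper v)]]] =
  [set w in [set f @: (v : {set T1}) | v in R] | [forall w' in [set f @: (v : {set T1}) | v in R], ~~ (w' \proper w)]].
Proof.
move=> finj RW.
have pr u v : u \in R -> v \in R -> (f @: u \proper f @: v) = (u \proper v).
  by move=> uR vR; rewrite !properE !(imset_sub finj) ?RW.
apply/setP => w; apply/imsetP/idP.
  case=> v vRs ->; rewrite inE in vRs; case/andP: vRs => vR vmin; move/forall_inP: vmin => vmin.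
  rewrite inE imset_f //=; apply/forall_inP => w' /imsetP [u uR ->].
  by rewrite pr //; apply: vmin.
rewrite inE => /andP[wF wmin]; move/forall_inP: wmin => wmin.
case/imsetP: wF wmin => v vR -> wmin.
exists v => //; rewrite inE vR /=; apply/forall_inP => u uR.
by rewrite -pr //; apply: wmin; apply: imset_f.
Qed.

Section Suff.
Variables h k' r : nat.
Hypotheses (r1 : 0 < r) (rh : r < h) (rk : r < k').
Let m := h * k' + r.
Let n := h * m.
Let h0 : 0 < h. Proof. lia. Qed.

Lemma emb_lt (j : 'I_m) : h * j < n.
Proof. by rewrite /n ltn_pmul2l. Qed.
Definition emb (j : 'I_m) : 'I_n := Ordinal (emb_lt j).
Lemma f_lt (x : 'I_n) : x %/ h < m.
Proof. by rewrite ltn_divLR // mulnC. Qed.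
Definition fdiv (x : 'I_n) : 'I_m := Ordinal (f_lt x).

Lemma f_emb j : fdiv (emb j) = j.
Proof. by apply: val_inj => /=; rewrite mulKn. Qed.

Lemma emb_f (x : 'I_n) : h %| x -> emb (fdiv x) = x.
Proof. by move=> hx; apply: val_inj => /=; rewrite mulnC divnK. Qed.

Lemma off_emb (a j : 'I_m) : off (emb a) (emb j) = h * off a j.
Proof.
rewrite !offE /= ltn_pmul2l //; case: ifP => _.
  by rewrite mulnBr mulnDr.
by rewrite mulnBr.
Qed.

Lemma win_ex (i : 'I_n) : exists a : 'I_m, off i (emb a) < h.
Proof.
have hi := divn_eq i h; set b := i %/ h in hi; set c := i %% h in hi.
have ch : c < h by rewrite /c ltn_mod.
have iN : i < n := ltn_ord i.
have bm : b < m by rewrite /b f_lt.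
clearbody b c.
case: (posnP c) => [c0|cpos].
  exists (Ordinal bm); rewrite offE /=.
  have -> : h * b = i by rewrite hi c0 addn0 mulnC.
  by rewrite ltnn subnn.
case: (ltnP b.+1 m) => bm1.
  exists (Ordinal bm1); rewrite offE /=.
  have e : h * b.+1 = b * h + h by rewrite mulnS mulnC addnC.
  rewrite e hi; clear -ch cpos; case: ifP => ?; lia.
have m0 : 0 < m by lia.
exists (Ordinal m0); rewrite offE /= muln0.
have e : n = b * h + h.
  rewrite /n; have -> : m = b.+1 by clear -bm bm1; lia.
  by rewrite mulnS mulnC addnC.
move: e; rewrite hi; move: (n) => nn e; clear -ch cpos e; case: ifP => ?; lia.
Qed.

Lemma img_win (i : 'I_n) (a : 'I_m) : off i (emb a) < h ->
  [set j | emb j \in circ_row m i] =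
  if off i (emb a) < r then circ_row k'.+1 a else circ_row k' a.
Proof.
set e := off i (emb a) => eh; apply/setP => j.
rewrite inE in_circ (off_add i (emb a) (emb j)) off_emb -/e.
have dm := off_lt a j; set d := off a j in dm *.
have hd : h * d + h <= n by rewrite /n addnC -mulnS leq_pmul2l.
rewrite modn_small; last lia.
have mE : m = h * k' + r by [].
case: ifP => er; rewrite in_circ -/d mE; clearbody e d.
  case: (ltngtP d k') => dk.
  - have : h * d.+1 <= h * k' by rewrite leq_pmul2l.
    rewrite mulnS => hh; have : d < k'.+1 by lia.
    move=> ->; apply/idP; lia.
  - have : h * k'.+1 <= h * d by rewrite leq_pmul2l.
    rewrite mulnS => hh; have : d < k'.+1 = false by lia.
    move=> ->; apply/negbTE; rewrite -leqNgt; lia.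
  - by subst d; rewrite ltnSn; apply/idP; lia.
case: (ltngtP d k') => dk.
- have : h * d.+1 <= h * k' by rewrite leq_pmul2l.
  rewrite mulnS => hh; apply/idP; lia.
- have : h * k'.+1 <= h * d by rewrite leq_pmul2l.
  rewrite mulnS => hh; apply/negbTE; rewrite -leqNgt; lia.
- by subst d; apply/negbTE; rewrite -leqNgt; lia.
Qed.

Lemma suff_minor : has_minor (circulant n m) (circulant m k').
Proof.
pose N := [set x : 'I_n | ~~ (h %| x)].
exists N; split; first exact: subsetT.
exists fdiv.
have WE x : (x \in [set: 'I_n] :\: N) = (h %| x) by rewrite !inE negbK andbT.
have finj : {in [set: 'I_n] :\: N &, injective fdiv}.
  by move=> x y; rewrite !WE => hx hy e; rewrite -(emb_f hx) -(emb_f hy) e.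
split; [exact: finj|split].
  apply/setP => j; rewrite inE; apply/imsetP; exists (emb j); last by rewrite f_emb.
  by rewrite WE /= dvdn_mulr.
rewrite /= (min_imset finj); last first.
  by move=> u /imsetP [v /imsetP [i _ ->] ->]; apply: setSD; apply: subsetT.
set F := [set fdiv @: (v : {set 'I_n}) | v in _].
have Fimg i : fdiv @: (circ_row m i :\: N) = [set j | emb j \in circ_row m i].
  apply/setP => j; rewrite inE; apply/imsetP/idP.
    case=> x; rewrite inE => /andP[xN xi] ->.
    by rewrite emb_f //; move: xN; rewrite inE negbK.
  move=> ji; exists (emb j); last by rewrite f_emb.
  by rewrite inE ji andbT inE negbK /= dvdn_mulr.
have FA w : w \in F -> exists a : 'I_m, w = circ_row k' a \/ w = circ_row k'.+1 a.
  case/imsetP => v /imsetP [v' /imsetP [i _ ->] ->] ->.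
  have [a ha] := win_ex i; exists a; rewrite Fimg (img_win ha).
  by case: ifP; [right|left].
have AF a : circ_row k' a \in F.
  have [i hi] : exists i, off i (emb a) = h.-1 by apply: off_ex2; rewrite /n; nia.
  have hlt : off i (emb a) < h by rewrite hi; lia.
  have := img_win hlt; rewrite hi (_ : h.-1 < r = false); last by lia.
  move=> <-; rewrite -Fimg; apply: imset_f; apply: imset_f; exact: imset_f.
have km : k' <= m by rewrite /m; nia.
have k1m : k'.+1 <= m by rewrite /m; nia.
have cA (a : 'I_m) : #|circ_row k' a| = k' by apply: card_circ a km.
have cB (a : 'I_m) : #|circ_row k'.+1 a| = k'.+1 by apply: card_circ a k1m.
have AB (a : 'I_m) : circ_row k' a \proper circ_row k'.+1 a.
  rewrite properEcard cA cB ltnSn andbT; apply/subsetP => x.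
  by rewrite !in_circ => /ltnW.
apply/setP => w; rewrite inE; apply/andP/imsetP.
  case=> wF /forall_inP wmin.
  have [a [->|ew]] := FA w wF; first by exists a.
  by have := wmin _ (AF a); rewrite ew AB.
case=> a _ ->; split; first exact: AF.
apply/forall_inP => w' /FA [b [->|->]]; apply/negP => /proper_card; rewrite !cA ?cB; lia.
Qed.

End Suff.

Unset Implicit Arguments.

Theorem mainTheorem3 (k' h r : nat) :
  (2 <= k')%N -> (1 <= h)%N -> (1 <= r <= k' - 1)%N ->
  (exists s k : nat, [/\ (0 < s)%N, (0 < k)%N, (k <= s * k - 1)%N &
      has_minor (circulant (s * k) k) (circulant (h * k' + r) k')])
  <-> (r <= h - 1)%N.
Proof.
move=> k2 h1 /andP[r1 rk].
split.
  case=> s [k [s0 k0 ksk [N [_ iso]]]].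
  have [] := necessity (n' := h * k' + r) (k' := k') _ _ iso.
    apply/andP; split => //; lia.
    apply/andP; split; nia.
  move=> h1' h2'.
  have sh : s * k' <= h * k' + r.
    by rewrite -(leq_pmul2r k0); move: h1'; rewrite mulnAC (mulnC (h * k' + r)).
  have sh' : s <= h.
    rewrite leqNgt; apply/negP => hs.
    have : h.+1 * k' <= s * k' by rewrite leq_mul2r hs orbT.
    rewrite mulSn; lia.
  have : s * k * k'.+1 <= h * k * k'.+1 by rewrite !leq_mul2r sh' !orbT.
  move: h2'; nia.
move=> rh.
exists h, (h * k' + r); split; [lia | lia | nia | ].
apply: suff_minor; lia.
Qed.
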